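(* Let $\mathbb S[\boldsymbol\kappa]$ be an unstable-negative feedback that is a $P^-_{FF}$ matrix. Then $\mathbb S[\boldsymbol\kappa]$ is $D$-Hopf.
   Context: For a reaction network with reactant coefficients $s^j_m$ and stoichiometric matrix $\mathbb S$, a $k$-Child-Selection $\boldsymbol\kappa=(\kappa,E_\kappa,J)$ is a bijection $J:\kappa\to E_\kappa$ between $k$ species and $k$ reactions with $s^{J(m)}_m>0$; its CS-matrix is $\mathbb S[\boldsymbol\kappa]_{ml}=\mathbb S_{m,J(l)}$. An unstable core is a Hurwitz-unstable (some eigenvalue with positive real part) CS-matrix with no Hurwitz-unstable proper principal submatrix; a $k\times k$ unstable core with $\operatorname{sign}\det=(-1)^k$ is an unstable-negative feedback. $P^-_0$ matrix: every nonzero $j\times j$ principal minor has sign $(-1)^j$. An $n\times n$ $P^-_0$ matrix is $P^-_{FF}$ if it has a nested sequence of invertible principal submatrices $A[\kappa_1]\subset\dots\subset A[\kappa_n]$ with $|\kappa_i|=i$. Inertia: numbers of eigenvalues with negative, positive, zero real part. $A$ is $D$-Hopf if there exist an invertible principal submatrix $A[\kappa]$ and positive diagonal $D_1,D_2$ with $\operatorname{inertia}(A[\kappa]D_1)\ne\operatorname{inertia}(A[\kappa]D_2)$. *)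

(* Defs.v *)
(* Real matrices over an arbitrary real closed field R;
   eigenvalues are taken in the algebraic closure R[i] (complex R). *)
From HB Require Import structures.
From mathcomp Require Import all_boot all_order all_algebra.
From mathcomp Require Import complex.
Set Implicit Arguments. Unset Strict Implicit. Unset Printing Implicit Defensive.
Import Order.TTheory GRing.Theory Num.Theory.
Local Open Scope ring_scope.

Section Defs.
Variable R : rcfType.

Definition cplx n (A : 'M[R]_n) : 'M[R[i]]_n :=
  map_mx (fun x : R => Complex x 0) A.

(* principal submatrix A[K] for an index set K (indices in increasing order) *)
Definition psub n (A : 'M[R]_n) (K : {set 'I_n}) : 'M[R]_#|K| :=
  \matrix_(i, j) A (enum_val i) (enum_val j).

Definition eigs n (A : 'M[R]_n) : seq R[i] :=
  sval (closed_field_poly_normal (char_poly (cplx A))).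

Definition inertia n (A : 'M[R]_n) : nat * nat * nat :=
  (count (fun z : R[i] => Re z < 0) (eigs A),
   count (fun z : R[i] => 0 < Re z) (eigs A),
   count (fun z : R[i] => Re z == 0) (eigs A)).

Definition hurwitz_unstable n (A : 'M[R]_n) : Prop :=
  exists z : R[i], root (char_poly (cplx A)) z /\ 0 < Re z.

Definition unstable_core n (A : 'M[R]_n) : Prop :=
  hurwitz_unstable A /\
  forall K : {set 'I_n}, K \proper setT -> ~ hurwitz_unstable (psub A K).

Definition unstable_negative_feedback n (A : 'M[R]_n) : Prop :=
  unstable_core A /\ \det A != 0 /\ Num.sg (\det A) = (-1) ^+ n.

Definition P0minus n (A : 'M[R]_n) : Prop :=
  forall K : {set 'I_n}, \det (psub A K) != 0 ->
    Num.sg (\det (psub A K)) = (-1) ^+ #|K|.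

Definition PFFminus n (A : 'M[R]_n) : Prop :=
  P0minus A /\
  exists kap : nat -> {set 'I_n},
    (forall i, (1 <= i <= n)%N ->
       #|kap i| = i /\ \det (psub A (kap i)) != 0) /\
    (forall i, (1 <= i < n)%N -> kap i \subset kap i.+1).

Definition posdiag n (D : 'M[R]_n) : Prop :=
  exists d : 'rV[R]_n, D = diag_mx d /\ forall i, 0 < d 0 i.

Definition DHopf n (A : 'M[R]_n) : Prop :=
  exists K : {set 'I_n}, \det (psub A K) != 0 /\
  exists D1 D2 : 'M[R]_#|K|, posdiag D1 /\ posdiag D2 /\
    inertia (psub A K *m D1) <> inertia (psub A K *m D2).

(* Reaction network with M species and E reactions: reactant coefficients
   s m j = s^j_m, stoichiometric matrix S.  A k-Child-Selection is given by an
   injective enumeration kap of the k species of kappa together with the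
   bijection J (as an injective map into reactions, E_kappa = image of J). *)
Definition child_selection M E k (s : 'M[R]_(M, E))
    (kap : 'I_k -> 'I_M) (J : 'I_k -> 'I_E) : Prop :=
  injective kap /\ injective J /\ forall m, 0 < s (kap m) (J m).

Definition CSmatrix M E k (S : 'M[R]_(M, E))
    (kap : 'I_k -> 'I_M) (J : 'I_k -> 'I_E) : 'M[R]_k :=
  \matrix_(m, l) S (kap m) (J l).

End Defs.

(* Main.v *)
Require Import Defs.
From HB Require Import structures.
From mathcomp Require Import all_boot all_order all_algebra.
From mathcomp Require Import complex.
From mathcomp Require Import fingroup perm.
Set Warnings "-all".
Set Implicit Arguments. Unset Strict Implicit. Unset Printing Implicit Defensive.
Import Order.TTheory GRing.Theory Num.Theory.
From mathcomp Require Import ring.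
Local Open Scope ring_scope.
Local Open Scope complex_scope.
Lemma Re_le_norm (R : rcfType) (x : R[i]) : 'Re x <= `|x|.
Proof. exact: (leif_Re_Creal x).1. Qed.

Lemma fac_bound (R : rcfType) (z mu : R[i]) : 0 <= 'Re z -> 'Re mu < 0 ->
  (- 'Re mu / (1 + `|mu| - 'Re mu)) * (1 + `|z|) <= `|z - mu|.
Proof.
move=> hz hmu.
set r := - 'Re mu. have r0 : 0 < r by rewrite oppr_gt0.
have ra : r <= `|z - mu|.
  apply: (le_trans _ (Re_le_norm (z - mu))).
  by rewrite raddfB /= -/r lerDr.
set a := `|z - mu|.
have za : `|z| <= a + `|mu|.
  by rewrite -{1}(subrK mu z) ler_normD.
have d0 : 0 < 1 + `|mu| + r by rewrite -addrA addr_gt0 // ltr_wpDl.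
rewrite -/r mulrAC ler_pdivrMr // mulrDr mulr1 mulrDr mulrDr mulr1.
have h1 : r * `|z| <= r * a + r * `|mu|.
  by rewrite -mulrDr ler_wpM2l // ltW.
apply: le_trans (lerD (lexx r) h1) _.
have e : r + (r * a + r * `|mu|) <= a + (a * r + a * `|mu|).
  apply: lerD => //; apply: lerD; first by rewrite mulrC.
  by rewrite ![_ * `|mu|]mulrC ler_wpM2l.
apply: (le_trans e); rewrite le_eqVlt; apply/orP; left; apply/eqP; ring.
Qed.
Definition cnorm (F : numDomainType) (p : {poly F}) := \sum_(i < size p) `|p`_i|.

Lemma cnorm_ge0 (F : numDomainType) (p : {poly F}) : 0 <= cnorm p.
Proof. by apply: sumr_ge0 => i _; exact: normr_ge0. Qed.

Lemma poly_bound (F : numDomainType) (p : {poly F}) (z : F) (k : nat) :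
  (size p <= k.+1)%N -> `|p.[z]| <= cnorm p * (1 + `|z|) ^+ k.
Proof.
move=> hs; rewrite horner_coef /cnorm.
apply: (le_trans (ler_norm_sum _ _ _)); rewrite mulr_suml.
apply: ler_sum => i _; rewrite normrM normrX ler_wpM2l //.
have h1 : 1 <= 1 + `|z| by rewrite lerDl.
apply: (le_trans (y := (1 + `|z|) ^+ i)).
  by rewrite lerXn2r ?nnegrE ?(le_trans ler01 h1) // lerDr.
apply: ler_weXn2l => //.
by rewrite -ltnS; exact: leq_trans (ltn_ord i) hs.
Qed.

Lemma poly_bound0 (F : numDomainType) (p : {poly F}) (z : F) :
  p.[0] = 0 -> `|z| <= 1 -> `|p.[z]| <= cnorm p * `|z|.
Proof.
move=> p0 hz; rewrite horner_coef /cnorm.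
apply: (le_trans (ler_norm_sum _ _ _)); rewrite mulr_suml.
apply: ler_sum => i _; rewrite normrM normrX.
case: i => [[|i] hi] /=.
  by rewrite -horner_coef0 p0 normr0 !mul0r.
by rewrite ler_wpM2l // ler_iXnr.
Qed.
Definition cf (R : rcfType) (mu : R[i]) := - 'Re mu / (1 + `|mu| - 'Re mu).

Lemma cf_gt0 (R : rcfType) (mu : R[i]) : 'Re mu < 0 -> 0 < cf mu.
Proof.
move=> h; rewrite /cf divr_gt0 ?oppr_gt0 //.
by apply: ltr_wpDl; [rewrite addr_ge0 | rewrite oppr_gt0].
Qed.

Lemma prod_bound (R : rcfType) (s : seq R[i]) (z : R[i]) : 0 <= 'Re z ->
  (forall mu, mu \in s -> 'Re mu < 0) ->
  (\prod_(mu <- s) cf mu) * (1 + `|z|) ^+ (size s) <= `|\prod_(mu <- s) (z - mu)|.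
Proof.
move=> hz; elim: s => [|mu s IH] hs.
  by rewrite !big_nil normr1 mul1r expr0.
rewrite !big_cons normrM /= exprS mulrACA.
have hmu : 'Re mu < 0 by apply: hs; rewrite mem_head.
apply: ler_pM.
- by apply: mulr_ge0; [exact/ltW/cf_gt0 | rewrite addr_ge0].
- apply: mulr_ge0; last by rewrite exprn_ge0 // addr_ge0.
  by rewrite big_seq; apply: prodr_ge0 => m hm; apply/ltW/cf_gt0/hs; rewrite in_cons hm orbT.
- exact: fac_bound.
- by apply: IH => m hm; apply: hs; rewrite in_cons hm orbT.
Qed.
Lemma core (R : rcfType) (q h : {poly R[i]}) :
  q != 0 -> (forall z, root q z -> 'Re z < 0) -> (size h <= size q)%N ->
  'Re (h.[0] / q.[0]) < 0 ->
  exists2 t : R[i], 0 < t & forall z, root ('X * q - t%:P * h) z -> 'Re z < 0.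
Proof.
move=> qn0 hq hsz hg.
have [s hs] := closed_field_poly_normal q.
set c := lead_coef q in hs. have c0 : c != 0 by rewrite lead_coef_eq0.
have hsq : size q = (size s).+1.
  by rewrite hs size_scale // size_prod_XsubC.
set k := size s in hsq.
have hmu : forall mu, mu \in s -> 'Re mu < 0.
  by move=> mu hm; apply: hq; rewrite hs rootZ // root_prod_XsubC.
set Q := `|c| * \prod_(mu <- s) cf mu.
have Q0 : 0 < Q.
  rewrite mulr_gt0 ?normr_gt0 // big_seq prodr_gt0 // => m hm.
  exact/cf_gt0/hmu.
have qlow : forall z, 0 <= 'Re z -> Q * (1 + `|z|) ^+ k <= `|q.[z]|.
  move=> z hz; rewrite [in X in _ <= X]hs hornerZ horner_prod normrM -mulrA ler_wpM2l //.
  rewrite [X in _ <= `|X|](eq_bigr (fun mu => z - mu)); last by move=> mu _; rewrite hornerXsubC.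
  exact: prod_bound.
set H := cnorm h.
have H0 : 0 <= H := cnorm_ge0 h.
have hup : forall z, `|h.[z]| <= H * (1 + `|z|) ^+ k.
  by move=> z; apply: poly_bound; rewrite -hsq.
set q0v := q.[0].
have q0p : 0 < `|q0v|.
  apply: (lt_le_trans _ (qlow 0 _)); last by rewrite raddf0.
  by rewrite normr0 addr0 expr1n mulr1.
have q0n : q0v != 0 by rewrite -normr_gt0.
set g0 := h.[0] / q0v.
set eps := - 'Re g0.
have eps0 : 0 < eps by rewrite oppr_gt0.
set w := h * q0v%:P - h.[0]%:P * q.
have w0 : w.[0] = 0 by rewrite /w !hornerE /= mulrC subrr.
set W := cnorm w.
have W0 : 0 <= W := cnorm_ge0 w.
set M := W * H / (Q * Q * `|q0v|).
have M0 : 0 <= M.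
  apply: divr_ge0; first exact: mulr_ge0.
  by apply: mulr_ge0 => //; apply: mulr_ge0; exact: ltW.
set a := Q / (H + 1).
set b := eps / (M + 1).
have H1 : 0 < H + 1 by apply: ltr_wpDl.
have M1 : 0 < M + 1 by apply: ltr_wpDl.
have a0 : 0 < a by rewrite divr_gt0.
have b0 : 0 < b by rewrite divr_gt0.
set t := a * b / (a + b).
have t0 : 0 < t := divr_gt0 (mulr_gt0 a0 b0) (addr_gt0 a0 b0).
have ta : t <= a.
  rewrite ler_pdivrMr ?addr_gt0 // mulrDr; apply: ler_wpDl => //.
  by apply: mulr_ge0; exact: ltW.
have tb : t <= b.
  rewrite ler_pdivrMr ?addr_gt0 // mulrDr mulrC; apply: ler_wpDr => //.
  by apply: mulr_ge0; exact: ltW.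
exists t => // z hz.
rewrite real_ltNge ?Creal_Re ?real0 //; apply/negP => hRe.
move: hz; rewrite /root !hornerE subr_eq0 => /eqP e.
set P := (1 + `|z|) ^+ k.
have P1 : 1 <= P by apply: exprn_ege1; rewrite lerDl.
have P0 : 0 < P := lt_le_trans ltr01 P1.
have qz := qlow z hRe.
have hz' := hup z.
have zle : `|z| * Q <= t * H.
  have : `|z| * (Q * P) <= t * (H * P).
    apply: (le_trans (y := `|z| * `|q.[z]|)); first by apply: ler_wpM2l.
    by rewrite -normrM e normrM (gtr0_norm t0) ler_wpM2l // ltW.
  by rewrite !mulrA ler_pM2r.
have tH : t * H <= Q.
  apply: (le_trans (ler_wpM2r H0 ta)).
  rewrite /a mulrAC ler_pdivrMr //; apply: ler_wpM2l; [exact: ltW | by rewrite lerDl].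
have z1 : `|z| <= 1.
  by rewrite -(ler_pM2r Q0) mul1r (le_trans zle tH).
have qzn : q.[z] != 0.
  rewrite -normr_gt0; apply: (lt_le_trans _ qz); exact: mulr_gt0.
have ez : z = t * (h.[z] / q.[z]) by rewrite mulrA -e mulfK.
have wz : w.[z] = h.[z] * q0v - h.[0] * q.[z] by rewrite /w !hornerE.
have diff : h.[z] / q.[z] = g0 + w.[z] / (q.[z] * q0v).
  rewrite wz /g0; field.
  by rewrite q0n qzn.
have wb : `|w.[z]| <= W * `|z| := poly_bound0 w0 z1.
have Db : `|w.[z] / (q.[z] * q0v)| <= t * M.
  have qq : 0 < `|q.[z]| * `|q0v| by rewrite mulr_gt0 // normr_gt0.
  rewrite normrM normfV normrM ler_pdivrMr //.
  apply: (le_trans wb).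
  have e2 : t * M * (Q * `|q0v|) = W * (t * H) / Q.
    rewrite /M; field.
    by apply/andP; split; apply: lt0r_neq0.
  apply: (le_trans (y := t * M * (Q * `|q0v|))).
    rewrite e2 ler_pdivlMr // -mulrA; apply: ler_wpM2l => //.
  apply: ler_wpM2l; first by apply: mulr_ge0 => //; exact: ltW.
  by apply: ler_wpM2r => //; apply: (le_trans _ qz); rewrite ler_peMr // ltW.
have tM : t * M < eps.
  apply: (le_lt_trans (ler_wpM2r M0 tb)).
  rewrite /b mulrAC ltr_pdivrMr // ltr_pM2l //.
  by rewrite ltrDl.
have ReHQ : 'Re (h.[z] / q.[z]) < 0.
  rewrite diff raddfD /=.
  have -> : 'Re g0 = - eps by rewrite opprK.
  rewrite addrC subr_lt0.
  exact: (le_lt_trans (Re_le_norm _) (le_lt_trans Db tM)).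
have : 'Re z < 0.
  by rewrite ez ReMl ?gtr0_real // pmulr_rlt0.
by move/lt_geF; rewrite hRe.
Qed.
Definition sub (F : Type) n m (A : 'M[F]_n) (f : 'I_m -> 'I_n) : 'M[F]_m :=
  \matrix_(i, j) A (f i) (f j).

Definition dgv (F : nzRingType) m (d : 'I_m -> F) : 'M[F]_m := diag_mx (\row_i d i).

Lemma sub_sub (F : Type) n m p (A : 'M[F]_n) (f : 'I_m -> 'I_n) (g : 'I_p -> 'I_m) :
  sub (sub A f) g = sub A (f \o g).
Proof. by apply/matrixP => i j; rewrite !mxE. Qed.

Lemma sub_mul_dgv (F : nzRingType) n m (A : 'M[F]_n) (d : 'I_n -> F) (f : 'I_m -> 'I_n) :
  sub (A *m dgv d) f = sub A f *m dgv (d \o f).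
Proof. by apply/matrixP => i j; rewrite /dgv !mul_mx_diag !mxE. Qed.

Lemma cplxE (R : rcfType) n (A : 'M[R]_n) : cplx A = map_mx (real_complex R) A.
Proof. by apply/matrixP => i j; rewrite !mxE. Qed.

Lemma cplx_sub (R : rcfType) n m (A : 'M[R]_n) (f : 'I_m -> 'I_n) :
  cplx (sub A f) = sub (cplx A) f.
Proof. by apply/matrixP => i j; rewrite !mxE. Qed.

Lemma sub_perm (F : nzRingType) m (M : 'M[F]_m) (s : 'S_m) :
  sub M s = perm_mx s *m M *m perm_mx (s^-1)%g.
Proof.
by rewrite -row_permE -col_permE; apply/matrixP => i j; rewrite !mxE.
Qed.

Lemma det_sub_perm (F : comNzRingType) m (M : 'M[F]_m) (s : 'S_m) :
  \det (sub M s) = \det M.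
Proof.
rewrite sub_perm !det_mulmx !det_perm mulrC mulrA -signr_addb.
by rewrite odd_permV addbb mul1r.
Qed.

Lemma char_poly_sub_perm (F : comNzRingType) m (M : 'M[F]_m) (s : 'S_m) :
  char_poly (sub M s) = char_poly M.
Proof.
rewrite /char_poly -(det_sub_perm (char_poly_mx M) s); congr (\det _).
apply/matrixP => i j; rewrite !mxE (inj_eq perm_inj) //.
Qed.

Lemma det_sub_inj (F : comNzRingType) m m' (e : m' = m) (M : 'M[F]_m) (g : 'I_m' -> 'I_m) :
  injective g -> \det (sub M g) = \det M.
Proof.
subst m' => gi; have -> : sub M g = sub M (perm gi).
  by apply/matrixP => i j; rewrite !mxE !permE.
exact: det_sub_perm.
Qed.

Lemma char_poly_sub_inj (F : comNzRingType) m m' (e : m' = m) (M : 'M[F]_m) (g : 'I_m' -> 'I_m) :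
  injective g -> char_poly (sub M g) = char_poly M.
Proof.
subst m' => gi; have -> : sub M g = sub M (perm gi).
  by apply/matrixP => i j; rewrite !mxE !permE.
exact: char_poly_sub_perm.
Qed.
Definition stab (R : rcfType) (p : {poly R[i]}) := forall z, root p z -> 'Re z < 0.

Definition ext (R : rcfType) m (d : 'I_m -> R) (t : R) : 'I_m.+1 -> R :=
  fun k => if unlift ord_max k is Some a then d a else t.

Lemma ext_lift (R : rcfType) m (d : 'I_m -> R) t a : ext d t (lift ord_max a) = d a.
Proof. by rewrite /ext liftK. Qed.

Lemma ext_max (R : rcfType) m (d : 'I_m -> R) t : ext d t ord_max = t.
Proof. by rewrite /ext unlift_none. Qed.

Definition Nmx (R : rcfType) m (B : 'M[R]_(m.+1)) d t :=
  char_poly_mx (cplx (B *m dgv (ext d t))).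

Definition hpol (R : rcfType) m (B : 'M[R]_(m.+1)) (d : 'I_m -> R) : {poly R[i]} :=
  \sum_i ((B i ord_max)%:C)%:P * cofactor (Nmx B d 0) i ord_max.

Lemma Nmx_M (R : rcfType) m (B : 'M[R]_(m.+1)) d t :
  Nmx B d t = \matrix_(i, j) ('X *+ (i == j) - ((B i j * ext d t j)%:C)%:P).
Proof. by apply/matrixP => i j; rewrite /Nmx /char_poly_mx /dgv mul_mx_diag !mxE. Qed.

Lemma Nmx_E (R : rcfType) m (B : 'M[R]_(m.+1)) d t i j :
  Nmx B d t i j = 'X *+ (i == j) - ((B i j * ext d t j)%:C)%:P.
Proof. by rewrite Nmx_M mxE. Qed.

Lemma cof_indep (R : rcfType) m (B : 'M[R]_(m.+1)) d t i :
  cofactor (Nmx B d t) i ord_max = cofactor (Nmx B d 0) i ord_max.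
Proof.
rewrite /cofactor !Nmx_M; congr (_ * \det _); apply/matrixP => a b.
by rewrite !mxE !ext_lift.
Qed.

Lemma cof_max (R : rcfType) m (B : 'M[R]_(m.+1)) d t :
  cofactor (Nmx B d t) ord_max ord_max =
  char_poly (cplx (sub B (lift ord_max) *m dgv d)).
Proof.
rewrite /cofactor addnn -signr_odd odd_double expr0 mul1r /char_poly.
congr (\det _); apply/matrixP => a b.
rewrite Nmx_M /dgv mul_mx_diag !mxE ext_lift (inj_eq (@lift_inj _ _)).
by [].
Qed.

Lemma charpoly_ext (R : rcfType) m (B : 'M[R]_(m.+1)) d t :
  char_poly (cplx (B *m dgv (ext d t))) =
  'X * char_poly (cplx (sub B (lift ord_max) *m dgv d)) - (t%:C)%:P * hpol B d.
Proof.
rewrite /char_poly -/(Nmx B d t) (expand_det_col _ ord_max).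
rewrite (eq_bigr (fun i => 'X *+ (i == ord_max) * cofactor (Nmx B d t) i ord_max
    - (t%:C)%:P * (((B i ord_max)%:C)%:P * cofactor (Nmx B d 0) i ord_max))); last first.
  move=> i _; rewrite Nmx_E ext_max cof_indep mulrBl; congr (_ - _).
  by rewrite mulrA -!rmorphM /= [t * _]mulrC.
rewrite big_split /= sumrN /hpol -mulr_sumr; congr (_ - _).
rewrite (bigD1 ord_max) //= big1 ?addr0; last first.
  by move=> i /negbTE ->; rewrite mul0r.
by rewrite eqxx mulr1n -/(char_poly _) cof_max.
Qed.
Lemma size_sub_monic (F : nzRingType) (p r : {poly F}) n :
  p \is monic -> r \is monic -> size p = n.+1 -> size r = n.+1 ->
  (size (p - r)%R <= n)%N.
Proof.
move=> pm rm sp sr; apply/leq_sizeP => j hj; rewrite coefB.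
case: (ltngtP n j) hj => // [hnj|<-] _.
  by rewrite !nth_default ?subrr // ?sp ?sr.
have -> : p`_n = lead_coef p by rewrite lead_coefE sp.
have -> : r`_n = lead_coef r by rewrite lead_coefE sr.
by rewrite (monicP pm) (monicP rm) subrr.
Qed.

Lemma det_cplx (R : rcfType) n (A : 'M[R]_n) : \det (cplx A) = (\det A)%:C.
Proof. by rewrite cplxE det_map_mx. Qed.

Lemma det_mul_dgv (F : comNzRingType) n (A : 'M[F]_n) (d : 'I_n -> F) :
  \det (A *m dgv d) = \det A * \prod_i d i.
Proof. by rewrite det_mulmx /dgv det_diag; congr (_ * _); apply: eq_bigr => i _; rewrite mxE. Qed.

Lemma prod_ext (R : rcfType) m (d : 'I_m -> R) t :
  \prod_i ext d t i = (\prod_i d i) * t.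
Proof.
rewrite big_ord_recr /= ext_max; congr (_ * _); apply: eq_bigr => i _.
have -> : widen_ord (leqnSn m) i = lift ord_max i by apply: val_inj; rewrite /= /bump leqNgt ltn_ord.
by rewrite ext_lift.
Qed.

Lemma char0 (F : comNzRingType) n (A : 'M[F]_n) : (char_poly A).[0] = (-1) ^+ n * \det A.
Proof. by rewrite horner_coef0 char_poly_det. Qed.
Lemma pos_real (R : rcfType) (t : R[i]) : 0 < t -> exists2 u : R, 0 < u & t = u%:C.
Proof.
move=> ht; have := ht; rewrite ltcE /= => /andP [/eqP hi hr].
exists (complex.Re t) => //.
by case: t ht hi hr => a b /= _ -> _.
Qed.

Lemma realc_neq0 (R : rcfType) (x : R) : x != 0 -> x%:C != 0 :> R[i].
Proof. by move=> hx; apply: contra hx => /eqP h; apply/eqP; case: h. Qed.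

Lemma step (R : rcfType) m (B : 'M[R]_(m.+1)) (d : 'I_m -> R) :
  (forall a, 0 < d a) ->
  stab (char_poly (cplx (sub B (lift ord_max) *m dgv d))) ->
  \det B * \det (sub B (lift ord_max)) < 0 ->
  exists2 t : R, 0 < t & stab (char_poly (cplx (B *m dgv (ext d t)))).
Proof.
move=> dpos hstab hdet.
set C := sub B (lift ord_max) in hstab hdet *.
set q := char_poly (cplx (C *m dgv d)) in hstab *.
set h := hpol B d.
have qm : q \is monic := char_poly_monic _.
have sq : size q = m.+1 := size_char_poly _.
have p1 := charpoly_ext B d 1.
rewrite rmorph1 mul1r -/C -/q in p1.
set P1 := char_poly _ in p1.
have hE : h = 'X * q - P1 by rewrite p1 opprB addrC subrK.
have hsz : (size h <= size q)%N.
  rewrite hE sq; apply: size_sub_monic.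
  - by rewrite monicMr // monicX.
  - exact: char_poly_monic.
  - by rewrite mulrC size_mulX ?monic_neq0 // sq.
  - exact: size_char_poly.
have dC0 : \det C != 0.
  by apply/negP => /eqP h0; move: hdet; rewrite h0 mulr0 ltxx.
have Pd : 0 < \prod_i d i by apply: prodr_gt0 => i _.
have h0 : h.[0] / q.[0] = (\det B / \det C)%:C.
  rewrite hE /P1 /q !hornerE !char0 !det_cplx !det_mul_dgv prod_ext mulr1.
  rewrite !rmorphM rmorphV ?unitfE //= exprS.
  field.
  by rewrite !realc_neq0 ?signr_eq0 // lt0r_neq0.
have hg : 'Re (h.[0] / q.[0]) < 0.
  have x0 : \det B / \det C < 0.
    have -> : \det B / \det C = (\det B * \det C) / (\det C ^+ 2).
      by field.
    by rewrite pmulr_llt0 // invr_gt0 exprn_even_gt0.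
  rewrite h0; have /Creal_ReP -> : (\det B / \det C)%:C \is Num.real.
    by rewrite complex_real.
  by rewrite -(rmorph0 (real_complex R)) ltcR.
have [tc tc0 hst] := core (monic_neq0 qm) hstab hsz hg.
have [u u0 tu] := pos_real tc0.
exists u => //.
by rewrite charpoly_ext -/C -/q -/h -tu.
Qed.
Lemma psubE (F : rcfType) n (A : 'M[F]_n) (K : {set 'I_n}) :
  psub A K = sub A (fun i => enum_val i).
Proof. by apply/matrixP => i j; rewrite !mxE. Qed.

Lemma image_full n (K : {set 'I_n}) i (f : 'I_i -> 'I_n) :
  #|K| = i -> injective f -> (forall a, f a \in K) -> forall x, x \in K -> x \in codom f.
Proof.
move=> cK fi fK x xK.
have e : f @: setT = K.
  apply/eqP; rewrite eqEcard card_imset // cardsT card_ord cK leqnn andbT.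
  by apply/subsetP => y /imsetP [a _ ->].
by move: xK; rewrite -e => /imsetP [a _ ->]; apply: codom_f.
Qed.

Lemma reindex n (K : {set 'I_n}) i (f : 'I_i -> 'I_n) :
  #|K| = i -> injective f -> (forall a, f a \in K) ->
  exists pi : 'I_#|K| -> 'I_i, injective pi /\ forall a, f (pi a) = enum_val a.
Proof.
move=> cK fi fK.
have hc : forall a : 'I_#|K|, enum_val a \in codom f.
  by move=> a; apply: (image_full cK fi fK); exact: enum_valP.
exists (fun a => iinv (hc a)); split; last by move=> a; rewrite f_iinv.
by move=> a b /(congr1 f); rewrite !f_iinv; apply: enum_val_inj.
Qed.

Lemma det_sub_psub (R : rcfType) n (A : 'M[R]_n) (K : {set 'I_n}) i (f : 'I_i -> 'I_n) :
  #|K| = i -> injective f -> (forall a, f a \in K) ->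
  \det (sub A f) = \det (psub A K).
Proof.
move=> cK fi fK; have [pi [pii hpi]] := reindex cK fi fK.
have -> : psub A K = sub (sub A f) pi.
  by apply/matrixP => a b; rewrite !mxE !hpi.
by rewrite (det_sub_inj cK).
Qed.
Lemma stab1 (R : rcfType) : stab (1 : {poly R[i]}).
Proof. by move=> z h; move: (root1 z); rewrite h. Qed.

Definition extf k i (f : 'I_i -> 'I_k) (x : 'I_k) : 'I_i.+1 -> 'I_k :=
  fun j => if unlift ord_max j is Some a then f a else x.

Lemma extf_lift k i (f : 'I_i -> 'I_k) x a : extf f x (lift ord_max a) = f a.
Proof. by rewrite /extf liftK. Qed.

Lemma extf_max k i (f : 'I_i -> 'I_k) x : extf f x ord_max = x.
Proof. by rewrite /extf unlift_none. Qed.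

Lemma extf_inj k i (f : 'I_i -> 'I_k) x :
  injective f -> x \notin codom f -> injective (extf f x).
Proof.
move=> fi xn j1 j2.
case: (unliftP ord_max j1) => [a1 ->|->]; case: (unliftP ord_max j2) => [a2 ->|->];
  rewrite ?extf_lift ?extf_max //.
- by move/fi => ->.
- by move=> e; move: xn; rewrite -e codom_f.
- by move=> e; move: xn; rewrite e codom_f.
Qed.

Lemma sgn_neg (R : rcfType) (x y : R) i :
  Num.sg x = (-1) ^+ i.+1 -> Num.sg y = (-1) ^+ i -> x * y < 0.
Proof.
move=> hx hy; rewrite -(sgr_cp0 _).1.2 sgrM hx hy exprS.
by rewrite -mulrA -exprD addnn -signr_odd odd_double expr0 mulr1.
Qed.

Lemma FF (R : rcfType) k (A : 'M[R]_k) (kap : nat -> {set 'I_k}) :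
  (forall i, (1 <= i <= k)%N -> #|kap i| = i /\ Num.sg (\det (psub A (kap i))) = (-1) ^+ i) ->
  (forall i, (1 <= i < k)%N -> kap i \subset kap i.+1) ->
  forall i, (i <= k)%N -> exists f : 'I_i -> 'I_k,
    [/\ injective f, (forall a, f a \in kap i) &
      exists2 d : 'I_i -> R, (forall a, 0 < d a) & stab (char_poly (cplx (sub A f *m dgv d)))].
Proof.
move=> hsg hsub.
have sgf : forall i (f : 'I_i -> 'I_k), (i <= k)%N -> injective f -> (forall a, f a \in kap i) ->
    Num.sg (\det (sub A f)) = (-1) ^+ i.
  move=> [|i] f hik fi fK.
    by rewrite det_mx00 sgr1 expr0.
  have [ci si] := hsg i.+1 hik.
  by rewrite (det_sub_psub A ci fi fK).
elim => [|i IH] hi.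
  exists (widen_ord (leq0n k)); split; first by move=> [].
    by move=> [].
  exists (fun _ => 1) => //.
  by rewrite /char_poly det_mx00; exact: stab1.
have [f [fi fK [d dpos dst]]] := IH (ltnW hi).
have [ci1 si1] := hsg i.+1 hi.
have sub1 : f @: setT \proper kap i.+1.
  rewrite properEcard card_imset // cardsT card_ord ci1 ltnSn andbT.
  apply/subsetP => y /imsetP [a _ ->].
  apply: (subsetP (hsub i _)); last exact: fK a.
  by rewrite hi andbT (leq_ltn_trans (leq0n a) (ltn_ord a)).
have [_ [x xK xn]] := properP sub1.
have xc : x \notin codom f.
  by apply: contra xn => /codomP [a ->]; apply/imsetP; exists a.
set f' := extf f x.
have f'i : injective f' := extf_inj fi xc.
have f'K : forall a, f' a \in kap i.+1.
  move=> a; case: (unliftP ord_max a) => [b ->|->]; rewrite /f' ?extf_lift ?extf_max //.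
  by apply: (subsetP (proper_sub sub1)); apply/imsetP; exists b.
have subf : sub (sub A f') (lift ord_max) = sub A f.
  by apply/matrixP => a b; rewrite !mxE /f' !extf_lift.
have hdet : \det (sub A f') * \det (sub (sub A f') (lift ord_max)) < 0.
  rewrite subf; apply: (sgn_neg (i := i)).
    exact: sgf.
  exact: sgf (ltnW hi) fi fK.
rewrite -subf in dst.
have [t t0 hst] := step dpos dst hdet.
exists f'; split => //.
exists (ext d t) => // a.
by case: (unliftP ord_max a) => [b ->|->]; rewrite ?ext_lift ?ext_max.
Qed.
Lemma mem_eigs (R : rcfType) n (A : 'M[R]_n) z :
  (z \in eigs A) = root (char_poly (cplx A)) z.
Proof.
rewrite /eigs; case: closed_field_poly_normal => s /= hs.
by rewrite [in RHS]hs (monicP (char_poly_monic _)) scale1r root_prod_XsubC.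
Qed.

Lemma inertia_neq (R : rcfType) n (A B : 'M[R]_n) :
  (exists z, root (char_poly (cplx A)) z /\ 0 < 'Re z) ->
  stab (char_poly (cplx B)) -> inertia A <> inertia B.
Proof.
move=> [z [rz Rz]] hB.
have h1 : (0 < count (fun z => (0 < 'Re z)%R) (eigs A))%N.
  by rewrite -has_count; apply/hasP; exists z => //; rewrite mem_eigs.
have h2 : count (fun z => (0 < 'Re z)%R) (eigs B) = 0%N.
  apply/eqP; rewrite -leqn0 leqNgt -has_count; apply/hasPn => w.
  by rewrite mem_eigs => /hB h; rewrite lt_gtF.
rewrite /inertia => -[_ e _].
by move: h1; rewrite e h2.
Qed.

Theorem mainTheorem14 (R : rcfType) (M E k : nat)
    (s S : 'M[R]_(M, E)) (kap : 'I_k -> 'I_M) (J : 'I_k -> 'I_E) :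
  child_selection s kap J ->
  unstable_negative_feedback (CSmatrix S kap J) ->
  PFFminus (CSmatrix S kap J) ->
  DHopf (CSmatrix S kap J).
Proof.
move=> _ [[hun _] [dA sA]] [P0 [kp [hk hsub]]].
move: (CSmatrix S kap J) hun dA sA P0 hk hsub => A hun dA sA P0 hk hsub.
have [k0|kpos] := posnP k.
  subst k; case: hun => z [].
  by rewrite /char_poly det_mx00 (negbTE (root1 z)).
have hsg : forall i, (1 <= i <= k)%N ->
    #|kp i| = i /\ Num.sg (\det (psub A (kp i))) = (-1) ^+ i.
  move=> i hi; have [ci di] := hk i hi; split => //.
  by rewrite P0 // ci.
have [f [fi fK [d dpos dst]]] := FF hsg hsub (leqnn k).
have hkk : (1 <= k <= k)%N by rewrite kpos leqnn.
have [ck dk] := hk k hkk.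
have [pi [pii hpi]] := reindex ck fi fK.
have eA : psub A (kp k) = sub (sub A f) pi.
  by apply/matrixP => a b; rewrite !mxE !hpi.
exists (kp k); split; first exact: dk.
exists (diag_mx (const_mx 1)), (dgv (d \o pi)); split; [|split].
- by exists (const_mx 1); split => // i; rewrite mxE ltr01.
- by exists (\row_i (d \o pi) i); split => // i; rewrite mxE; apply: dpos.
apply: inertia_neq.
- case: hun => z [rz Rz]; exists z; split => //.
  rewrite diag_const_mx mulmx1 eA cplx_sub (char_poly_sub_inj ck _ pii).
  by rewrite cplx_sub (char_poly_sub_inj (erefl k) _ fi).
- by rewrite eA -sub_mul_dgv cplx_sub (char_poly_sub_inj ck _ pii).
Qed.
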